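(* Let $L$ be a co-Heyting algebra, $a\in L$ and $d$ a positive integer. Then $\dim_L a\geq d$ if and only if there exist $x_0,\dots,x_d\in L$ with $0\neq x_d\ll x_{d-1}\ll\cdots\ll x_0\leq a$; and $\operatorname{codim}_L a\geq d$ if and only if there exist $x_0,\dots,x_d\in L$ with $a\leq x_d\ll x_{d-1}\ll\cdots\ll x_0$. In particular, there is a single positive existential first-order formula in the language $\{0,1,\vee,\wedge,-\}$ which defines the set $dL=\{a\in L:\operatorname{codim}_L a\ge d\}$ in every co-Heyting algebra $L$.
   Context: A co-Heyting algebra is a bounded distributive lattice $(L,0,1,\vee,\wedge)$ such that for all $a,b$ the element $a-b=\min\{c\in L: a\le b\vee c\}$ exists; it is regarded as a structure in the language $\{0,1,\vee,\wedge,-\}$. The strong order: $b\ll a$ iff $b\le a$ and $a-b=a$. Foundation rank in an ordered set: $\operatorname{rk}x\ge0$; $\operatorname{rk}x\ge\beta+1$ iff some $y<x$ has $\operatorname{rk}y\ge\beta$; at limits, $\operatorname{rk}x\ge\lambda$ iff $\operatorname{rk}x\ge\beta$ for all $\beta<\lambda$; cofoundation rank is foundation rank for the reverse order. $\operatorname{Spec}L$ is the set of prime filters ordered by inclusion; height/coheight of $\mathfrak p$ are its foundation/cofoundation ranks in $\operatorname{Spec}L$. $\dim_L a=\sup\{\operatorname{coheight}\mathfrak p: a\in\mathfrak p\in\operatorname{Spec}L\}$ and $\operatorname{codim}_L a=\min\{\operatorname{height}\mathfrak p: a\in\mathfrak p\in\operatorname{Spec}L\}$, with $\sup\emptyset=-\infty$,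 $\min\emptyset=+\infty$. *)

(* Defs.v *)
From HB Require Import structures.
From mathcomp Require Import all_boot all_order.
Set Implicit Arguments. Unset Strict Implicit. Unset Printing Implicit Defensive.
Import Order.LTheory.
Local Open Scope order_scope.

Section CoHeyting.
Context {disp : Order.disp_t} {L : tbDistrLatticeType disp}.

(* [sub a b] is a - b = min {c : a <= b \/ c}: it belongs to the set and is
   below every element of the set.  A co-Heyting algebra is a bounded
   distributive lattice together with such an operation. *)
Definition coHeyting_diff (sub : L -> L -> L) : Prop :=
  forall a b : L, a <= b `|` sub a b /\ (forall c, a <= b `|` c -> sub a b <= c).

Definition sll (sub : L -> L -> L) (b a : L) : Prop := b <= a /\ sub a b = a.

Definition prime_filter (p : L -> Prop) : Prop :=
  [/\ p \top, ~ p \bot,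
      (forall x y, x <= y -> p x -> p y),
      (forall x y, p x -> p y -> p (x `&` y)) &
      (forall x y, p (x `|` y) -> p x \/ p y)].

Definition spec_lt (p q : L -> Prop) : Prop :=
  (forall x, p x -> q x) /\ ~ (forall x, q x -> p x).

Fixpoint height_ge (n : nat) (p : L -> Prop) : Prop :=
  match n with
  | 0 => True
  | n'.+1 => exists q, prime_filter q /\ spec_lt q p /\ height_ge n' q
  end.

Fixpoint coheight_ge (n : nat) (p : L -> Prop) : Prop :=
  match n with
  | 0 => True
  | n'.+1 => exists q, prime_filter q /\ spec_lt p q /\ coheight_ge n' q
  end.

(* dim_L a >= d, for a natural number d >= 1:
   sup {coheight p : a in p} >= d  (sup of empty = -oo).  Since d is finite,
   the sup is >= d iff some coheight is >= d. *)
Definition dim_ge (a : L) (d : nat) : Prop :=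
  exists p, prime_filter p /\ p a /\ coheight_ge d p.

(* codim_L a >= d: min {height p : a in p} >= d (min of empty = +oo). *)
Definition codim_ge (a : L) (d : nat) : Prop :=
  forall p, prime_filter p -> p a -> height_ge d p.

End CoHeyting.

(* First-order syntax in the language {0,1,join,meet,-}; variables are de Bruijn
   indices. *)
Inductive cterm : Type :=
  | tvar of nat | tzero | tone
  | tjoin of cterm & cterm | tmeet of cterm & cterm | tsub of cterm & cterm.

(* positive existential formulas: atomic equations, /\, \/, exists
   (pex binds variable 0) *)
Inductive pexform : Type :=
  | peq of cterm & cterm
  | pand of pexform & pexform
  | por of pexform & pexform
  | pex of pexform.

Section Semantics.
Context {disp : Order.disp_t} {L : tbDistrLatticeType disp} (sub : L -> L -> L).

Fixpoint teval (e : nat -> L) (t : cterm) : L :=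
  match t with
  | tvar n => e n
  | tzero => \bot
  | tone => \top
  | tjoin s u => teval e s `|` teval e u
  | tmeet s u => teval e s `&` teval e u
  | tsub s u => sub (teval e s) (teval e u)
  end.

Definition scons (v : L) (e : nat -> L) : nat -> L :=
  fun n => match n with 0 => v | n'.+1 => e n' end.

Fixpoint holds (e : nat -> L) (f : pexform) : Prop :=
  match f with
  | peq s u => teval e s = teval e u
  | pand f g => holds e f /\ holds e g
  | por f g => holds e f \/ holds e g
  | pex f => exists v, holds (scons v e) f
  end.
End Semantics.

(* Main.v *)
Require Import Defs.
From HB Require Import structures.
From mathcomp Require Import all_boot all_order.
From mathcomp Require classical_sets.
From Stdlib Require Import Classical FunctionalExtensionality.
Import Order.LTheory.
Local Open Scope order_scope.
Set Implicit Arguments. Unset Strict Implicit.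

Section Sep.
Context {disp : Order.disp_t} {L : tbDistrLatticeType disp}.

Definition ideal (I : L -> Prop) :=
  [/\ I \bot, (forall x y, x <= y -> I y -> I x) & (forall x y, I x -> I y -> I (x `|` y))].

Lemma ideal_ext (J : L -> Prop) x : ideal J ->
  ideal (fun z => exists j, J j /\ z <= j `|` x).
Proof.
case=> J0 Jd Ju; split.
- by exists \bot; split => //; exact: le0x.
- by move=> z z' h [j [Jj hj]]; exists j; split => //; exact: le_trans hj.
- move=> z z' [j [Jj hj]] [j' [Jj' hj']]; exists (j `|` j'); split; first exact: Ju.
  rewrite leUx; apply/andP; split.
  + by apply: le_trans hj _; apply: leU2 => //; exact: leUl.
  + by apply: le_trans hj' _; apply: leU2 => //; exact: leUr.
Qed.

Lemma separation (I : L -> Prop) a : ideal I -> ~ I a ->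
  exists q, prime_filter q /\ q a /\ (forall z, q z -> ~ I z).
Proof.
move=> HI nIa.
pose P := fun J : L -> Prop => (forall z, ~ J z) \/
  (ideal J /\ (forall z, I z -> J z) /\ ~ J a).
have [A [PA maxA]] : exists A : classical_sets.set L, P A /\
  (forall B : classical_sets.set L, classical_sets.proper A B -> ~ P B).
  apply: classical_sets.Zorn_bigcup => F FP Ftot.
  rewrite /classical_sets.bigcup /classical_sets.mkset /=.
  have [nonE|] := classic (exists z, exists2 X, F X & X z); last first.
    by move=> h; left => z hz; apply: h; exists z.
  have FI : forall X z, F X -> X z -> ideal X /\ (forall z, I z -> X z) /\ ~ X a.
    by move=> X z FX Xz; case: (FP X FX) => // h; case: (h z Xz).
  case: nonE => z0 [X0 FX0 X0z0]; have [[X00 _ _] [IX0 _]] := FI X0 z0 FX0 X0z0.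
  right; split; [split|split].
  - by exists X0.
  - move=> x y hxy [X FX Xy]; exists X => //; have [[_ Xd _] _] := FI X y FX Xy.
    exact: Xd hxy Xy.
  - move=> x y [X FX Xx] [Y FY Yy].
    have [[_ _ Xu] _] := FI X x FX Xx; have [[_ _ Yu] _] := FI Y y FY Yy.
    case: (Ftot X Y FX FY) => hXY.
    + by exists Y => //; apply: Yu => //; exact: hXY.
    + by exists X => //; apply: Xu => //; exact: hXY.
  - by move=> z Iz; exists X0 => //; exact: IX0.
  - by move=> [X FX Xa]; have [_ [_ ]] := FI X a FX Xa; apply.
have [[A0 Ad Au] [IA nAa]] : ideal A /\ (forall z, I z -> A z) /\ ~ A a.
  case: PA => // hE; exfalso; apply: (maxA I).
  - split; first by move=> t /hE.
    by move=> h; case: HI => I0 _ _; exact: hE _ (h _ I0).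
  - by right; split => //; split.
exists (fun z => ~ A z); split; last first.
  by split => // z nAz Iz; apply: nAz; exact: IA.
have ext : forall x, ~ A x -> A a \/ exists j, A j /\ a <= j `|` x.
  move=> x nAx; right; apply: NNPP => hn; apply: (maxA (fun z => exists j, A j /\ z <= j `|` x)).
  - split; first by move=> t At; exists t; split => //; exact: leUl.
    by move=> h; apply: nAx; apply: h; exists \bot; split => //; exact: leUr.
  - by right; split; [exact: ideal_ext|split => //; move=> z Iz; exists z; split; [exact: IA|exact: leUl]].
split.
- by move=> AT; apply: nAa; apply: Ad AT; exact: lex1.
- by [].
- by move=> x y hxy nAx Ay; apply: nAx; exact: Ad hxy Ay.
- move=> x y nAx nAy Axy.
  case: (ext x nAx) => [/nAa []|[j [Aj hj]]]; case: (ext y nAy) => [/nAa []|[j' [Aj' hj']]].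
  apply: nAa; apply: (Ad _ ((j `|` j') `|` (x `&` y))); last by apply: (Au) => //; exact: (Au).
  rewrite joinIr lexI; apply/andP; split.
  + by apply: le_trans hj _; apply: leU2 => //; exact: leUl.
  + by apply: le_trans hj' _; apply: leU2 => //; exact: leUr.
- move=> x y nAxy; apply: NNPP => h; apply: nAxy; apply: Au; apply: NNPP => h'; apply: h; tauto.
Qed.
End Sep.

Section Alg.
Context {disp : Order.disp_t} {L : tbDistrLatticeType disp} (sub : L -> L -> L).
Context (Hs : coHeyting_diff sub).

Lemma subP a b c : (sub a b <= c) <-> (a <= b `|` c).
Proof.
split.
- move=> h; apply: le_trans (proj1 (Hs a b)) _; by rewrite leUx leUl /= (le_trans h) // leUr.
- exact: (proj2 (Hs a b)).
Qed.

Lemma sub_le a b : sub a b <= a.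
Proof. by apply/subP; rewrite leUr. Qed.

Lemma sub_mono a a' b : a <= a' -> sub a b <= sub a' b.
Proof. by move=> h; apply/subP; apply: le_trans h (proj1 (Hs a' b)). Qed.

Lemma sll_of y x : y <= x -> x <= sub x y -> sll sub y x.
Proof. by move=> h1 h2; split => //; apply/le_anti; rewrite sub_le h2. Qed.

Lemma sll_ge y x : sll sub y x -> x <= sub x y.
Proof. by case=> _ ->. Qed.

Lemma bnd_sll x c : sll sub (x `&` c `&` sub x c) x.
Proof.
set s := sub x c; set E := x `&` c `&` s; set t := sub x E.
have Ex : E <= x by apply: le_trans (leIl _ _) _; exact: leIl.
have Ec : E <= c by apply: le_trans (leIl _ _) _; exact: leIr.
have Es : E <= s by rewrite /E leIr.
apply: sll_of => //.
have xEt : x <= E `|` t by exact: (proj1 (Hs x E)).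
have st : s <= t.
  apply/subP; apply: le_trans xEt _; by rewrite leUx leUr andbT (le_trans Ec) // leUl.
have rt : sub x s <= t.
  apply/subP; apply: le_trans xEt _; by rewrite leUx leUr andbT (le_trans Es) // leUl.
apply: le_trans (proj1 (Hs x s)) _; by rewrite leUx st rt.
Qed.

Lemma sll_bot x : sll sub \bot x.
Proof. apply: sll_of; first exact: le0x. by apply: le_trans (proj1 (Hs x \bot)) _; rewrite join0x. Qed.

Lemma sll_join y y' x : sll sub y x -> sll sub y' x -> sll sub (y `|` y') x.
Proof.
move=> [hy ey] [hy' ey']; apply: sll_of; first by rewrite leUx hy hy'.
set t := sub x (y `|` y').
have h1 : x <= y `|` (y' `|` t) by rewrite joinA; exact: (proj1 (Hs x _)).
have h2 : x <= y' `|` t by rewrite -{1}ey; apply/subP.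
by rewrite -{1}ey'; apply/subP.
Qed.

Definition incl (q p : L -> Prop) := forall z, q z -> p z.

Lemma pf_up (p : L -> Prop) x y : prime_filter p -> x <= y -> p x -> p y.
Proof. by case=> _ _ h _ _; exact: h. Qed.

Lemma pf_meet (p : L -> Prop) x y : prime_filter p -> p x -> p y -> p (x `&` y).
Proof. by case=> _ _ _ h _; exact: h. Qed.

Lemma pf_sub_easy (p q : L -> Prop) x c : prime_filter q -> incl q p -> q x -> ~ q c -> p (sub x c).
Proof.
move=> pq hi qx nqc; apply: hi.
have : q (c `|` sub x c) by apply: (pf_up pq) (proj1 (Hs x c)) qx.
by case: pq => _ _ _ _ h /h [].
Qed.

Lemma pf_sub_hard (p : L -> Prop) x y : prime_filter p -> p (sub x y) ->
  exists q, prime_filter q /\ incl q p /\ q x /\ ~ q y.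
Proof.
move=> pp psub.
pose I := fun z => exists w, ~ p w /\ z <= y `|` w.
have pb : ~ p \bot by case: pp.
have HI : ideal I.
  split.
  - by exists \bot; split => //; exact: le0x.
  - by move=> z z' h [w [nw hw]]; exists w; split => //; exact: le_trans hw.
  - move=> z z' [w [nw hw]] [w' [nw' hw']]; exists (w `|` w'); split.
    + by case: pp => _ _ _ _ h /h [].
    + rewrite leUx; apply/andP; split.
      * by apply: le_trans hw _; apply: leU2 => //; exact: leUl.
      * by apply: le_trans hw' _; apply: leU2 => //; exact: leUr.
have nIx : ~ I x.
  by move=> [w [nw hw]]; apply: nw; apply: (pf_up pp) _ psub; exact: (proj2 (subP x y w) hw).
have [q [pq [qx dq]]] := separation HI nIx.
exists q; split => //; split; last split => //.
- move=> z qz; apply: NNPP => npz; apply: (dq z qz); exists z; split => //; exact: leUr.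
- by move=> qy; apply: (dq y qy); exists \bot; split => //; exact: leUl.
Qed.

Lemma exists_pf (x : L) : x != \bot -> exists p, prime_filter p /\ p x.
Proof.
move=> nx.
have HI : ideal (fun z : L => z <= \bot).
  split => //.
  - by move=> z z' h h'; exact: le_trans h'.
  - by move=> z z' h h'; rewrite leUx h h'.
have nIx : ~ (x <= \bot) by rewrite lex0; apply/negP.
by have [q [pq [qx _]]] := separation HI nIx; exists q.
Qed.

Definition chain n (x : nat -> L) := forall i, (i < n)%N -> sll sub (x i.+1) (x i).

Lemma chain_S n x : chain n.+1 x -> chain n x.
Proof. by move=> h i hi; apply: h; exact: ltnW. Qed.

Lemma down_step (p : L -> Prop) (x y : L) : prime_filter p -> sll sub y x -> p y ->
  exists q, prime_filter q /\ spec_lt q p /\ q x.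
Proof.
move=> pp [hle he] py.
have px : p x by exact: pf_up pp hle py.
have : p (sub x y) by rewrite he.
move=> /(pf_sub_hard pp) [q [pq [iq [qx nqy]]]].
by exists q; split => //; split => //; split => // h; apply: nqy; exact: h.
Qed.

Lemma dim_back n : forall x : nat -> L, chain n x -> forall p, prime_filter p -> p (x n) ->
  forall m, coheight_ge m p -> exists q, prime_filter q /\ q (x 0%N) /\ coheight_ge (n + m) q.
Proof.
elim: n => [|n IH] x hx p pp pxn m hm; first by exists p.
have [q [pq [lqp qx]]] := down_step pp (hx n (ltnSn n)) pxn.
have := IH x (chain_S hx) q pq qx m.+1; rewrite addSnnS; apply.
by exists p.
Qed.

Lemma codim_back n : forall x : nat -> L, chain n x -> forall p, prime_filter p -> p (x n) ->
  height_ge n p.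
Proof.
elim: n => [|n IH] x hx p pp pxn //.
have [q [pq [lqp qx]]] := down_step pp (hx n (ltnSn n)) pxn.
by exists q; split => //; split => //; exact: IH (chain_S hx) q pq qx.
Qed.

Lemma pick_diff (p q : L -> Prop) : spec_lt p q -> exists c, q c /\ ~ p c.
Proof.
case=> _ h; apply: NNPP => hn; apply: h => z qz; apply: NNPP => npz; apply: hn; by exists z.
Qed.

Lemma dim_fwd n : forall p, prime_filter p -> coheight_ge n p -> forall y, p y ->
  exists x, x 0%N = y /\ chain n x /\ x n != \bot.
Proof.
elim: n => [|n IH] p pp hp y py.
  exists (fun _ => y); split => //; split => // ; apply/eqP => ey.
  by case: pp => _ h _ _ _; apply: h; rewrite -ey.
case: hp => q [pq [lpq hq]].
have [c [qc npc]] := pick_diff lpq.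
set z := y `&` c `&` sub y c.
have qz : q z.
  apply: (pf_meet pq) _ _; first apply: (pf_meet pq) _ qc; first exact: (proj1 lpq).
  by apply: (pf_sub_easy pp) (proj1 lpq) py npc.
have [x' [x0 [hx' nx']]] := IH q pq hq z qz.
exists (fun i => if i is i'.+1 then x' i' else y); split => //; split => //.
case=> [|i] hi /=; first by rewrite x0; exact: bnd_sll.
exact: hx'.
Qed.

Fixpoint F (x : L) (C : seq L) : L :=
  if C is c :: C' then (x `&` c `&` sub x c) `|` F x C' else \bot.

Lemma F_sll x C : sll sub (F x C) x.
Proof.
elim: C => [|c C IH] /=; first exact: sll_bot.
by apply: sll_join => //; exact: bnd_sll.
Qed.

Lemma F_mono x x' C : x <= x' -> F x C <= F x' C.
Proof.
move=> h; elim: C => [|c C IH] //=.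
apply: leU2 => //; apply: leI2; first exact: leI2.
exact: sub_mono.
Qed.

Lemma F_cat x C C' : F x (C ++ C') = F x C `|` F x C'.
Proof. by elim: C => [|c C IH] /=; [rewrite join0x|rewrite IH joinA]. Qed.

Inductive reach : nat -> L -> Prop :=
| reach0 : reach 0 \top
| reachS k x C : reach k x -> reach k.+1 (F x C).

Lemma reach_ex k : exists y, reach k y.
Proof.
elim: k => [|k [y hy]]; first by exists \top; exact: reach0.
by exists (F y [::]); exact: reachS.
Qed.

Lemma reach_dir k : forall x x', reach k x -> reach k x' -> exists z, reach k z /\ x <= z /\ x' <= z.
Proof.
elim: k => [|k IH] x x' h h'.
  by inversion h; inversion h'; exists \top; split => //; exact: reach0.
inversion h as [|k1 y C hy]; inversion h' as [|k2 y' C' hy']; subst.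
have [z [hz [yz y'z]]] := IH y y' hy hy'.
exists (F z (C ++ C')); split; first exact: reachS.
rewrite F_cat; split.
- by apply: le_trans (F_mono C yz) _; exact: leUl.
- by apply: le_trans (F_mono C' y'z) _; exact: leUr.
Qed.

Lemma reach_chain k0 y0 : reach k0 y0 -> exists x, x k0 = y0 /\ chain k0 x.
Proof.
elim=> [|k y' C hr [x [xk hx]]]; first by exists (fun _ => \top).
exists (fun i => if i == k.+1 then F y' C else x i); split; first by rewrite eqxx.
move=> i hi; rewrite eqSS.
have -> : (i == k.+1) = false by apply/negbTE; rewrite neq_ltn hi.
case: (eqVneq i k) => [->|nik]; first by rewrite xk; exact: F_sll.
by apply: hx; rewrite ltn_neqAle nik -ltnS.
Qed.

Lemma reach_pf k : forall p, prime_filter p -> height_ge k p -> exists y, reach k y /\ p y.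
Proof.
elim: k => [|k IH] p pp hp.
  by exists \top; split; [exact: reach0|case: pp].
case: hp => q [pq [lqp hq]].
have [y [ry qy]] := IH q pq hq.
have [c [pc nqc]] := pick_diff lqp.
exists (F y [:: c]); split; first exact: reachS.
rewrite /=; apply: (pf_up pp) (leUl _ _) _.
apply: (pf_meet pp) _ _; first apply: (pf_meet pp) _ pc; first exact: (proj1 lqp).
exact: pf_sub_easy pq (proj1 lqp) qy nqc.
Qed.

Lemma codim_fwd (a : L) d : codim_ge a d -> exists x, a <= x d /\ chain d x.
Proof.
move=> hc.
pose I := fun z => exists y, reach d y /\ z <= y.
have HI : ideal I.
  split.
  - by have [y hy] := reach_ex d; exists y; split => //; exact: le0x.
  - by move=> z z' h [y [ry hy]]; exists y; split => //; exact: le_trans hy.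
  - move=> z z' [y [ry hy]] [y' [ry' hy']].
    have [w [rw [yw y'w]]] := reach_dir ry ry'.
    by exists w; split => //; rewrite leUx (le_trans hy) // (le_trans hy').
have [[y [ry ay]]|nIa] := classic (I a).
  by have [x [xd hx]] := reach_chain ry; exists x; rewrite xd.
have [q [pq [qa dq]]] := separation HI nIa.
have [y [ry qy]] := reach_pf pq (hc q pq qa).
by exfalso; apply: (dq y qy); exists y.
Qed.

End Alg.

Unset Implicit Arguments.

Section Form.
Context {disp : Order.disp_t} {L : tbDistrLatticeType disp} (sub : L -> L -> L).

Definition env (n : nat) (vs e : nat -> L) : nat -> L :=
  fun j => if (j < n)%N then vs (n.-1 - j)%N else e (j - n)%N.

Lemma holds_iter n : forall e f, holds sub e (iter n pex f) <-> exists vs, holds sub (env n vs e) f.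
Proof.
elim: n => [|n IH] e f.
  have E : forall vs, env 0 vs e = e by move=> vs; apply: functional_extensionality => j; rewrite /env subn0.
  by split; [move=> h; exists (fun _ => \bot); rewrite E | case=> vs; rewrite E].
have E : forall v vs, env n vs (scons v e) = env n.+1 (fun i => if i is i'.+1 then vs i' else v) e.
  move=> v vs; apply: functional_extensionality => j; rewrite /env.
  case: (ltngtP j n) => hj.
  - rewrite ltnS (ltnW hj) /=.
    have -> : (n - j = (n.-1 - j).+1)%N by case: n hj {IH} => // n hj /=; rewrite subSn.
    by [].
  - rewrite ltnNge hj /= subnS.
    have : (0 < j - n)%N by rewrite subn_gt0.
    by case: (j - n)%N.
  - by rewrite hj ltnSn subnn.
rewrite iterS /=; split.
- case=> v /IH [vs h]; exists (fun i => if i is i'.+1 then vs i' else v); by rewrite -E.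
- case=> w h; exists (w 0%N); apply/IH; exists (fun i => w i.+1); rewrite E.
  have -> : (fun i => if i is i'.+1 then w i'.+1 else w 0%N) = w.
    by apply: functional_extensionality; case.
  by [].
Qed.

Definition chainf (d : nat) : nat -> pexform :=
  fix cf k := match k with
  | 0 => peq tzero tzero
  | k'.+1 => pand (cf k') (pand (peq (tjoin (tvar (d - k'.+1)) (tvar (d - k'))) (tvar (d - k')))
                               (peq (tsub (tvar (d - k')) (tvar (d - k'.+1))) (tvar (d - k'))))
  end.

Lemma env_lt d x e j : (j <= d)%N -> env d.+1 x e j = x (d - j)%N.
Proof. by move=> h; rewrite /env ltnS h. Qed.

Lemma chainf_holds d x e k : (k <= d)%N ->
  (holds sub (env d.+1 x e) (chainf d k) <->
   forall i, (i < k)%N -> x i.+1 `|` x i = x i /\ sub (x i) (x i.+1) = x i).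
Proof.
elim: k => [|k IH] hk /=; first by split.
rewrite !env_lt ?leq_subr // !subKn // ?(ltnW hk) //.
rewrite IH ?(ltnW hk) //; split.
- case=> h1 h2 i; rewrite ltnS leq_eqVlt; case/orP => [/eqP ->//|/h1 //].
- move=> h; split; first by move=> i hi; apply: h; exact: ltnW.
  exact: h.
Qed.

End Form.

Lemma sll_eq {disp : Order.disp_t} {L : tbDistrLatticeType disp} (sub : L -> L -> L) (y x : L) :
  sll sub y x <-> y `|` x = x /\ sub x y = x.
Proof.
rewrite /sll; split; case=> h1 h2; split => //; first by apply/eqP; rewrite -leEjoin.
by rewrite leEjoin h1.
Qed.

Definition phi_form (d : nat) : pexform :=
  iter d.+1 pex (pand (peq (tjoin (tvar d.+1) (tvar 0)) (tvar 0)) (chainf d d)).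

Theorem theorem3p8 (d : nat) (hd : (0 < d)%N) :
  (forall (disp : Order.disp_t) (L : tbDistrLatticeType disp) (sub : L -> L -> L),
     coHeyting_diff sub ->
     forall a : L,
       (dim_ge a d <->
        exists x : nat -> L,
          [/\ x d != \bot,
              (forall i, (i < d)%N -> sll sub (x i.+1) (x i)) &
              x 0%N <= a]) /\
       (codim_ge a d <->
        exists x : nat -> L,
          a <= x d /\ (forall i, (i < d)%N -> sll sub (x i.+1) (x i)))) /\
  (exists phi : pexform,
     forall (disp : Order.disp_t) (L : tbDistrLatticeType disp) (sub : L -> L -> L),
       coHeyting_diff sub ->
       forall (a : L) (e : nat -> L), e 0%N = a ->
         (holds sub e phi <-> codim_ge a d)).
Proof.
have codimE : forall (disp : Order.disp_t) (L : tbDistrLatticeType disp) (sub : L -> L -> L),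
     coHeyting_diff sub -> forall a : L,
       (codim_ge a d <->
        exists x : nat -> L,
          a <= x d /\ (forall i, (i < d)%N -> sll sub (x i.+1) (x i))).
  move=> disp L sub Hs a; split; first exact: codim_fwd.
  case=> x [ax hx] p pp pa.
  apply: (codim_back Hs hx pp); exact: pf_up pp ax pa.
split.
  move=> disp L sub Hs a; split; last exact: codimE.
  split.
  - case=> p [pp [pa hc]].
    have [x [x0 [hx nx]]] := dim_fwd Hs pp hc pa.
    by exists x; split => //; rewrite x0.
  - case=> x [nx hx xa].
    have [p [pp pd]] := exists_pf nx.
    have [q [pq [qx hq]]] := dim_back Hs hx pp pd (m := 0) I.
    exists q; split => //; split; first exact: pf_up pq xa qx.
    by rewrite addn0 in hq.
exists (phi_form d) => disp L sub Hs a e e0.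
rewrite codimE // /phi_form holds_iter.
have E1 : forall x, env d.+1 x e d.+1 = a by move=> x; rewrite /env ltnn subnn.
have E2 : forall x, env d.+1 x e 0 = x d by move=> x; rewrite env_lt // subn0.
split.
- case=> x /= [h1 h2].
  exists x; split.
  + move: h1; rewrite E1 E2 => h1.
    by rewrite leEjoin h1.
  + move=> i hi; apply/sll_eq; move/(chainf_holds sub d x e d (leqnn d)): h2; apply; done.
- case=> x [ax hx]; exists x => /=; split.
  + by rewrite E1 E2; apply/eqP; rewrite -leEjoin.
  + by apply/(chainf_holds sub d x e d (leqnn d)) => i hi; apply/sll_eq; exact: hx.
Qed.
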